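(* Let $p,q,K$ be complex numbers with $p\neq0$ and $K(1+q/p)\neq1$, and set $K'=K\big(K(1+q/p)-1\big)^{-1}$. For any complex $L$ let $$\hat R(L;p,q)=\begin{pmatrix}1&0&0&0\\0&1-L&L/p&0\\0&Lq&1-Lq/p&0\\0&0&0&1\end{pmatrix},\qquad R(L;p,q)=P\hat R(L;p,q).$$ Then $R(K';p,q)$ is invertible and $$P\,R(K;p,q)\,P=\big(R(K';p,q)\big)^{-1}.$$ In particular, for $K=2p(p+q)^{-1}$ (assuming $p+q\neq0$) one has $K'=K$ and $\hat R(K;p,q)^2=I_4$.
   Context: Matrices are written in the ordered basis $e_1\otimes e_1,e_1\otimes e_2,e_2\otimes e_1,e_2\otimes e_2$ of $\mathbb{C}^2\otimes\mathbb{C}^2$; $P$ is the flip matrix, i.e. the $4\times4$ permutation matrix swapping the second and third basis vectors. The matrix $PRP$ is what the paper denotes $(21)R$. *)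

(* Defs.v *)
From HB Require Import structures.
From mathcomp Require Import all_boot all_order all_algebra.
From mathcomp Require Import complex.
From mathcomp Require Import reals.
Set Implicit Arguments. Unset Strict Implicit. Unset Printing Implicit Defensive.
Import Order.TTheory GRing.Theory Num.Theory.
Local Open Scope ring_scope.

Notation Cplx R := (R[i])%type.

Section Defs.
Variable R : realType.
Local Notation C := (Cplx R).

(* Basis order e1e1, e1e2, e2e1, e2e2 = indices 0,1,2,3. *)
Definition flipP : 'M[C]_4 :=
  \matrix_(i < 4, j < 4)
    (if ((i : nat) == 1%N) then ((j : nat) == 2%N)%:R
     else if ((i : nat) == 2%N) then ((j : nat) == 1%N)%:R
     else ((i : nat) == j)%:R).

Definition Rhat (L p q : C) : 'M[C]_4 :=
  \matrix_(i < 4, j < 4)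
    match (i : nat), (j : nat) with
    | 0, 0 => 1
    | 1, 1 => 1 - L
    | 1, 2 => L / p
    | 2, 1 => L * q
    | 2, 2 => 1 - L * q / p
    | 3, 3 => 1
    | _, _ => 0
    end.

Definition Rmat (L p q : C) : 'M[C]_4 := flipP *m Rhat L p q.

Definition Kprime (K p q : C) : C := K * (K * (1 + q / p) - 1)^-1.
End Defs.

(* Main.v *)
Require Import Defs.
From HB Require Import structures.
From mathcomp Require Import all_boot all_order all_algebra.
From mathcomp Require Import complex.
From mathcomp Require Import reals.
From mathcomp Require Import ring.
Import Order.TTheory GRing.Theory Num.Theory.
Local Open Scope ring_scope.

Lemma flipP2 (R : realType) : flipP R *m flipP R = 1%:M.
Proof.
apply/matrixP => i j; rewrite !mxE !big_ord_recl big_ord0 /= !mxE.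
case: i => [[|[|[|[|i]]]] Hi] //; case: j => [[|[|[|[|j]]]] Hj] //=;
  rewrite /bump /=; try ring.
Qed.

Lemma RhatK {R : realType} {p q K : R[i]} : p != 0 -> K * (1 + q / p) != 1 ->
  Rhat K p q *m Rhat (Kprime K p q) p q = 1%:M.
Proof.
move=> hp hK.
have hK' : K * (1 + q / p) - 1 != 0 by rewrite subr_eq0.
apply/matrixP => i j; rewrite !mxE !big_ord_recl big_ord0 /= !mxE /Kprime.
case: i => [[|[|[|[|i]]]] Hi] //; case: j => [[|[|[|[|j]]]] Hj] //=;
  rewrite /bump /=; try ring.
all: have hs : K * (1 + q / p) - 1 = (K * (p + q) - p) / p by field.
all: have hn : K * (p + q) - p != 0 by move: hK'; rewrite hs mulf_eq0 negb_or => /andP[].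
all: rewrite hs invf_div; field; rewrite ?hn ?hp.
all: by [].
Qed.

Theorem mainTheorem9 (R : realType) (p q : R[i]) (hp : p != 0) :
  (forall K : R[i], K * (1 + q / p) != 1 ->
     Rmat (Kprime K p q) p q \in unitmx /\
     flipP R *m Rmat K p q *m flipP R = invmx (Rmat (Kprime K p q) p q)) /\
  (p + q != 0 ->
     let K := 2 * p / (p + q) in
     Kprime K p q = K /\ Rhat K p q *m Rhat K p q = 1%:M).
Proof.
split.
  move=> K hK.
  have E : (Rhat K p q *m flipP R) *m Rmat (Kprime K p q) p q = 1%:M.
    by rewrite /Rmat mulmxA -(mulmxA (Rhat K p q)) flipP2 mulmx1 (RhatK hp hK).
  have [_ U] := mulmx1_unit E.
  split => //.
  have -> : flipP R *m Rmat K p q *m flipP R = Rhat K p q *m flipP R.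
    by rewrite /Rmat mulmxA flipP2 mul1mx.
  by rewrite -[RHS]mul1mx -E -(mulmxA (Rhat K p q *m flipP R)) mulmxV // mulmx1.
move=> hpq K.
have hs : K * (1 + q / p) = 2.
  by rewrite /K; field; rewrite ?hp ?hpq.
have h1 : (2:R[i]) - 1 = 1 by ring.
have hK : K * (1 + q / p) != 1.
  rewrite hs; apply/eqP => h2.
  by move: (oner_neq0 (R[i])); rewrite -h1 h2 subrr eqxx.
have kp : Kprime K p q = K.
  by rewrite /Kprime hs h1 invr1 mulr1.
split => //.
by have := RhatK hp hK; rewrite kp.
Qed.
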